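(* Let $M,N$ be indecomposable non-projective $A_n^\ell$-modules. If $\underline{\mathrm{Hom}}(M,N)=0$ and $\underline{\mathrm{Hom}}(N,M)=0$, then $\mathrm{top}(M)\not\cong\mathrm{top}(N)$ and $\mathrm{soc}(M)\not\cong\mathrm{soc}(N)$.
   Context: $A_n^\ell=kQ/I$ ($k$ algebraically closed), $Q$ the cyclic quiver with vertices $1,\dots,n$ and arrows $i\to i+1$, $n\to 1$, $I$ generated by all paths of length $\ell+1$. $\underline{\mathrm{Hom}}$ denotes Hom modulo morphisms factoring through projective modules. *)

(* Defs.v *)
(* Finite-dimensional representations of the cyclic quiver
   Q (vertices 'I_n, arrows i -> ordS i) bound by all paths of length l+1,
   i.e. finite-dimensional modules over A_n^l = kQ/I.
   Vectors are row vectors: the arrow i -> i+1 acts by right multiplication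
   with a matrix of size (dim i) x (dim (i+1)). *)
From HB Require Import structures.
From mathcomp Require Import all_boot all_order all_algebra.
Set Implicit Arguments. Unset Strict Implicit. Unset Printing Implicit Defensive.
Import GRing.Theory.
Local Open Scope ring_scope.

Section Reps.
Variables (k : fieldType) (n : nat).

Record rep := Rep {
  rdim : 'I_n -> nat;
  rarr : forall i : 'I_n, 'M[k]_(rdim i, rdim (ordS i)) }.

Fixpoint pathmx (M : rep) (i : 'I_n) (m : nat) :
    'M[k]_(rdim M i, rdim M (iter m (@ordS n) i)) :=
  match m with
  | 0 => 1%:M
  | m'.+1 => pathmx M i m' *m rarr M (iter m' (@ordS n) i)
  end.

Definition bound (l : nat) (M : rep) : Prop :=
  forall i : 'I_n, pathmx M i l.+1 = 0.

Definition is_hom (M N : rep) (f : forall i, 'M[k]_(rdim M i, rdim N i)) : Prop :=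
  forall i : 'I_n, rarr M i *m f (ordS i) = f i *m rarr N i.

Record hom (M N : rep) := Hom {
  homf :> forall i, 'M[k]_(rdim M i, rdim N i);
  homP : is_hom homf }.

(* g \o f, written as composition of the families f then g *)
Definition compf (M N L : rep) (f : forall i, 'M[k]_(rdim M i, rdim N i))
  (g : forall i, 'M[k]_(rdim N i, rdim L i)) : forall i, 'M[k]_(rdim M i, rdim L i) :=
  fun i => f i *m g i.

Definition idf (M : rep) : forall i, 'M[k]_(rdim M i, rdim M i) := fun i => 1%:M.

Definition iso (M N : rep) : Prop :=
  exists (f : hom M N) (g : hom N M),
    (forall i, compf f g i = idf M i) /\ (forall i, compf g f i = idf N i).

Definition surj_hom (M N : rep) (f : hom M N) : Prop :=
  forall i, \rank (f i) = rdim N i.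

Definition zero_rep (M : rep) : Prop := forall i, rdim M i = 0%N.

Definition dsum (X Y : rep) : rep :=
  @Rep (fun i => (rdim X i + rdim Y i)%N)
       (fun i => block_mx (rarr X i) 0 0 (rarr Y i)).

Definition indecomposable (M : rep) : Prop :=
  ~ zero_rep M /\
  forall X Y : rep, iso M (dsum X Y) -> zero_rep X \/ zero_rep Y.

Definition projective (l : nat) (P : rep) : Prop :=
  forall (X Y : rep), bound l X -> bound l Y ->
  forall (g : hom X Y), surj_hom g ->
  forall (h : hom P Y), exists h' : hom P X, forall i, compf h' g i = h i.

(* \underline{Hom}(M,N) = 0 : every morphism M -> N factors through a
   projective A_n^l-module *)
Definition stable_hom_zero (l : nat) (M N : rep) : Prop :=
  forall f : hom M N, exists (P : rep) (a : hom M P) (b : hom P N),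
    bound l P /\ projective l P /\ forall i, compf a b i = f i.

(* top(M) = M / rad M.  rad M at vertex i is the image of the arrow
   ord_pred i -> i, so top(M)_i has dimension dim M_i - rank(arrow into i);
   all arrows of M/rad M are zero (arrows land in rad M). *)
Definition top (M : rep) : rep :=
  @Rep (fun i => (rdim M i - \rank (rarr M (ord_pred i)))%N) (fun i => 0).

(* soc(M) : at vertex i the kernel of the arrow i -> i+1, of dimension
   dim M_i - rank(arrow out of i); the arrows restricted to soc are zero. *)
Definition soc (M : rep) : rep :=
  @Rep (fun i => (rdim M i - \rank (rarr M i))%N) (fun i => 0).

End Reps.

(* Main.v *)
Set Warnings "-notation-overridden,-ambiguous-paths".
Require Import Defs.
From HB Require Import structures.
From mathcomp Require Import all_boot all_order all_algebra.
From mathcomp Require Import zify.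
Set Implicit Arguments. Unset Strict Implicit. Unset Printing Implicit Defensive.
Import GRing.Theory.
Local Open Scope ring_scope.

Section Aux.
Variables (k : fieldType) (n : nat).
Implicit Types (M N : rep k n).

Definition tr (d : 'I_n -> nat) (a b : 'I_n) : 'M[k]_(d a, d b) :=
  match a =P b with ReflectT e => castmx (erefl, congr1 d e) (1%:M : 'M_(d a)) | ReflectF _ => 0 end.

Lemma tr_id d a : tr d a a = 1%:M.
Proof.
rewrite /tr; case: eqP => // e; by rewrite (eq_irrelevance e erefl) castmx_id.
Qed.

Lemma tr_neq d a b : a != b -> tr d a b = 0.
Proof. by rewrite /tr; case: eqP. Qed.

Lemma tr_comm (d1 d2 : 'I_n -> nat) (F : forall j, 'M[k]_(d1 j, d2 j)) a b :
  tr d1 a b *m F b = F a *m tr d2 a b.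
Proof.
case: (a =P b) => [<-|/eqP ne]; first by rewrite !tr_id mul1mx mulmx1.
by rewrite !tr_neq // mul0mx mulmx0.
Qed.

Lemma tr_trans d a b c : a = b -> tr d a b *m tr d b c = tr d a c.
Proof. by move=> <-; rewrite tr_id mul1mx. Qed.

Definition R M a b : 'M[k]_(rdim M a, rdim M b) := locked (rarr M a *m tr (rdim M) (ordS a) b).

Lemma RE M a b : R M a b = rarr M a *m tr (rdim M) (ordS a) b.
Proof. by rewrite /R -lock. Qed.

Definition Pth M a b m : 'M[k]_(rdim M a, rdim M b) :=
  locked (pathmx M a m *m tr (rdim M) (iter m (@ordS n) a) b).

Lemma PthE M a b m : Pth M a b m = pathmx M a m *m tr (rdim M) (iter m (@ordS n) a) b.
Proof. by rewrite /Pth -lock. Qed.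

Arguments Pth : simpl never.
Arguments tr : simpl never.

Lemma Pth0 M a b : Pth M a b 0 = tr (rdim M) a b.
Proof. by rewrite !PthE mul1mx. Qed.

Lemma Pth_neq M a b m : iter m (@ordS n) a != b -> Pth M a b m = 0.
Proof. by move=> ne; rewrite !PthE tr_neq // mulmx0. Qed.

Lemma PthS M a c m :
  Pth M a c m.+1 = Pth M a (iter m (@ordS n) a) m *m R M (iter m (@ordS n) a) c.
Proof. by rewrite !PthE RE tr_id mulmx1 /= mulmxA. Qed.

Lemma Pth1 M a c : Pth M a c 1 = R M a c.
Proof. by rewrite PthS Pth0 tr_id mul1mx. Qed.

Lemma Pth_comp M a b c m m' : iter m (@ordS n) a = b ->
  Pth M a b m *m Pth M b c m' = Pth M a c (m + m').
Proof.
move=> eb; elim: m' c => [|m' IH] c.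
  by rewrite addn0 Pth0 !PthE -mulmxA tr_trans.
rewrite addnS PthS mulmxA IH PthS.
have -> : iter (m + m') (@ordS n) a = iter m' (@ordS n) b by rewrite -eb -iterD addnC.
by [].
Qed.

Lemma PthSl M a c m : Pth M a c m.+1 = rarr M a *m Pth M (ordS a) c m.
Proof.
by rewrite -add1n -(@Pth_comp _ _ (ordS a)) // Pth1 RE tr_id mulmx1.
Qed.

Lemma hom_R M N (f : Defs.hom M N) a b : f a *m R N a b = R M a b *m f b.
Proof. by rewrite !RE -mulmxA tr_comm mulmxA -(Defs.homP f) mulmxA. Qed.

Lemma hom_Pth M N (f : Defs.hom M N) a b m : f a *m Pth N a b m = Pth M a b m *m f b.
Proof.
elim: m b => [|m IH] b; first by rewrite !Pth0 (tr_comm (homf f)).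
by rewrite !PthS mulmxA IH -mulmxA (hom_R f) mulmxA.
Qed.

Lemma Pth_height M h : (forall a, pathmx M a h.+1 = 0) ->
  forall a b m, (h < m)%N -> Pth M a b m = 0.
Proof.
move=> H a b m; elim: m b => [|m IH] b //; rewrite ltnS leq_eqVlt => /orP[/eqP<-|lt].
  by rewrite !PthE H mul0mx.
by rewrite PthS IH // mul0mx.
Qed.


Definition Bm d (E : 'M[k]_d) : 'M[k]_(\rank E, d) := locked (row_base E).
Definition Cm d (E : 'M[k]_d) : 'M[k]_(d, \rank E) := locked (E *m pinvmx (row_base E)).

Section IdemMx.
Variables (d : nat) (E : 'M[k]_d).
Hypothesis HE : E *m E = E.

Lemma CmBm : Cm E *m Bm E = E.
Proof. by rewrite /Cm -lock /Bm -lock mulmxKpV // eq_row_base submx_refl. Qed.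

Lemma BmE : Bm E *m E = Bm E.
Proof.
have /submxP[D ->] : (Bm E <= E)%MS by rewrite /Bm -lock eq_row_base submx_refl.
by rewrite -mulmxA HE.
Qed.

Lemma BmCm : Bm E *m Cm E = 1%:M.
Proof. by rewrite /Cm -lock mulmxA BmE /Bm -lock mulmxVp // row_base_free. Qed.

Lemma ECm : E *m Cm E = Cm E.
Proof. by rewrite /Cm -lock mulmxA HE. Qed.

Lemma idemC : (1%:M - E) *m (1%:M - E) = 1%:M - E.
Proof. by rewrite mulmxBl mul1mx mulmxBr mulmx1 HE subrr subr0. Qed.

Lemma BmC_0 : Bm E *m Cm (1%:M - E) = 0.
Proof. by rewrite /Cm -lock mulmxA mulmxBr mulmx1 BmE subrr mul0mx. Qed.

End IdemMx.

Lemma BmC_0' d (E : 'M[k]_d) : E *m E = E -> Bm (1%:M - E) *m Cm E = 0.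
Proof.
move=> HE; have h := BmE (idemC HE).
rewrite /Cm -lock mulmxA; have -> : Bm (1%:M - E) *m E = 0.
  by rewrite -{1}h -mulmxA mulmxBl mul1mx HE subrr mulmx0.
by rewrite mul0mx.
Qed.

Section Split.
Variables (M : rep k n) (E : forall j, 'M[k]_(rdim M j)).
Hypothesis HE : forall j, E j *m E j = E j.
Hypothesis Hc : forall j, rarr M j *m E (ordS j) = E j *m rarr M j.

Definition Xrep := @Rep k n (fun j => \rank (E j))
   (fun j => Bm (E j) *m rarr M j *m Cm (E (ordS j))).

Lemma split_L1 j : Cm (E j) *m (Bm (E j) *m rarr M j *m Cm (E (ordS j))) = rarr M j *m Cm (E (ordS j)).
Proof. by rewrite !mulmxA CmBm // -Hc -mulmxA ECm. Qed.

Lemma split_L2 j : Bm (E j) *m rarr M j *m Cm (E (ordS j)) *m Bm (E (ordS j)) = Bm (E j) *m rarr M j.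
Proof. by rewrite -mulmxA CmBm // -mulmxA Hc mulmxA BmE. Qed.
End Split.

Lemma idem_triv M (e : Defs.hom M M) : indecomposable M ->
  (forall j, e j *m e j = e j) -> (forall j, e j = 0) \/ (forall j, e j = 1%:M).
Proof.
move=> [_ Hind] He.
have Hc : forall j, rarr M j *m e (ordS j) = e j *m rarr M j := Defs.homP e.
pose E' : forall j, 'M[k]_(rdim M j) := fun j => 1%:M - e j.
have He' : forall j, E' j *m E' j = E' j by move=> j; exact: idemC.
have Hc' : forall j, rarr M j *m E' (ordS j) = E' j *m rarr M j.
  by move=> j; rewrite /E' mulmxBr mulmxBl mulmx1 mul1mx Hc.
pose X := Xrep e; pose Y := Xrep E'.
pose f j : 'M[k]_(rdim M j, rdim (dsum X Y) j) := row_mx (Cm (e j)) (Cm (E' j)).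
pose g j : 'M[k]_(rdim (dsum X Y) j, rdim M j) := col_mx (Bm (e j)) (Bm (E' j)).
have fP : is_hom f.
  move=> j; rewrite /f /= mul_mx_row mul_row_block !mulmx0 !addr0 add0r.
  by rewrite (split_L1 He Hc) (split_L1 He' Hc').
have gP : is_hom g.
  move=> j; rewrite /g /= mul_col_mx !mul_row_col !mul0mx addr0 add0r.
  by rewrite (split_L2 He Hc) (split_L2 He' Hc') mul_col_mx.
have : iso M (dsum X Y).
  exists (Defs.Hom fP), (Defs.Hom gP); split => j; rewrite /compf /=.
    by rewrite /f /g mul_row_col !CmBm // /E' addrC subrK.
  rewrite /f /g mul_col_row BmCm // BmCm // BmC_0 // BmC_0' //.
  by rewrite [RHS](scalar_mx_block).
move/Hind => [] HZ; [left|right] => j; have := HZ j => /= /eqP; rewrite mxrank_eq0 => /eqP //.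
by rewrite /E' => /eqP; rewrite subr_eq0 => /eqP.
Qed.

Lemma sep_exists d m (S : 'M[k]_(m, d)) (u : 'rV[k]_d) : ~~ (u <= S)%MS ->
  exists phi : 'cV[k]_d, S *m phi = 0 /\ u *m phi = 1%:M.
Proof.
rewrite submxE => c0; set c := u *m cokermx S in c0.
have [j cj] : exists j, c 0 j != 0.
  apply/existsP; move: c0; apply: contraR; rewrite negb_exists => /forallP H.
  apply/eqP/matrixP => a b; rewrite ord1 [in RHS]mxE; apply/eqP; have := H b; by rewrite negbK.
exists ((c 0 j)^-1 *: col j (cokermx S)); split.
  by rewrite -scalemxAr colE mulmxA mulmx_coker mul0mx scaler0.
rewrite -scalemxAr colE mulmxA -/c -colE.
apply/matrixP => a b; rewrite !ord1 !mxE /= mulVf //; move: cj; by rewrite mxE.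
Qed.

Lemma compf_hom M N L (f : Defs.hom M N) (g : Defs.hom N L) : is_hom (compf f g).
Proof. by move=> j; rewrite /compf mulmxA (Defs.homP f) -mulmxA (Defs.homP g) mulmxA. Qed.

Lemma PthR M a b m : Pth M a b m *m rarr M b = Pth M a (ordS b) m.+1.
Proof.
case: (iter m (@ordS n) a =P b) => [<-|ne].
  by rewrite PthS RE tr_id mulmx1.
have ne' : iter m (@ordS n) a != b by apply/eqP.
rewrite (@Pth_neq M _ _ _ ne') mul0mx Pth_neq //=.
by rewrite (inj_eq (@ordS_inj n)).
Qed.

Lemma Pth_pred M a b m : Pth M a b m.+1 = Pth M a (ord_pred b) m *m R M (ord_pred b) b.
Proof.
case: (iter m (@ordS n) a =P ord_pred b) => [<-|ne].
  by rewrite PthS.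
have ne' : iter m (@ordS n) a != ord_pred b by apply/eqP.
rewrite (@Pth_neq M _ _ _ ne') mul0mx Pth_neq //=.
apply/eqP => e; apply: ne; by rewrite -e ordSK.
Qed.

Lemma R_Pth M a c m : R M a (ordS a) *m Pth M (ordS a) c m = Pth M a c m.+1.
Proof. by rewrite -Pth1 Pth_comp. Qed.

Lemma R_neq M a b : a != ord_pred b -> R M a b = 0.
Proof.
move=> ne; rewrite RE tr_neq ?mulmx0 //; apply: contra ne => /eqP <-.
by rewrite ordSK.
Qed.

Lemma Pth_ext M j (u : 'rV[k]_(rdim M j)) m :
  (forall b, u *m Pth M j b m = 0) -> forall m', (m <= m')%N -> forall b, u *m Pth M j b m' = 0.
Proof.
move=> H m'; elim: m' => [|m' IH].
  by rewrite leqn0 => /eqP E; rewrite E in H.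
rewrite leq_eqVlt => /orP[/eqP E|]; first by rewrite -E.
rewrite ltnS => le b.
by rewrite PthS mulmxA IH // mul0mx.
Qed.

Lemma iter_ordS_inj m : injective (iter m (@ordS n)).
Proof.
elim: m => [//|m IH] a b /= /ordS_inj; exact: IH.
Qed.

Lemma iso_dim M N : iso M N -> forall j, rdim M j = rdim N j.
Proof.
move=> [f [g [H1 H2]]] j; apply/eqP; rewrite eqn_leq.
have := H1 j; have := H2 j; rewrite /compf /idf => e2 e1.
apply/andP; split.
  by rewrite -{1}(mxrank1 k (rdim M j)) -e1 (leq_trans (mxrankM_maxl _ _)) // rank_leq_col.
by rewrite -{1}(mxrank1 k (rdim N j)) -e2 (leq_trans (mxrankM_maxl _ _)) // rank_leq_col.
Qed.

Lemma rank_tr d a b m (A : 'M[k]_(m, d a)) : a = b -> \rank (A *m tr d a b) = \rank A.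
Proof. by move=> <-; rewrite tr_id mulmx1. Qed.

Section Gen.
Variables (M : rep k n) (h : nat) (i : 'I_n) (p : 'rV[k]_(rdim M i)).
Hypothesis Hh : forall a, pathmx M a h.+1 = 0.
Local Notation s := (iter h (@ordS n) i).
Hypothesis Hp : p *m Pth M i s h != 0.

Lemma HPth a b m : (h < m)%N -> Pth M a b m = 0.
Proof. exact: Pth_height. Qed.

Lemma indep (c : 'I_h.+1 -> k) :
  \sum_(t < h.+1) c t *: (p *m Pth M i s t) = 0 -> c ord_max = 0.
Proof.
move=> Hs; apply/eqP; apply/negPn/negP => cmax.
pose P t := [&& (t < h.+1)%N, c (inord t) != 0 & iter t (@ordS n) i == s].
have exP : exists t, P t.
  exists h; rewrite /P ltnSn eqxx andbT /=.
  by have -> : inord h = ord_max :> 'I_h.+1 by apply/val_inj; rewrite /= inordK.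
case: (ex_minnP exP) => t0 /and3P[lt0 ct0 it0] mint0.
move/(congr1 (fun X => X *m Pth M s s (h - t0))): Hs.
rewrite mul0mx mulmx_suml (bigD1 (inord t0)) // big1 /=.
  rewrite addr0 -scalemxAl -mulmxA inordK //.
  rewrite (@Pth_comp M i s s t0 (h - t0)); last by apply/eqP.
  rewrite subnKC; last by rewrite -ltnS.
  move=> /eqP; rewrite scaler_eq0 (negbTE ct0) /=.
  by apply/negP.
move=> t tne; rewrite -scalemxAl.
case: (iter t (@ordS n) i =P s) => [its|itns]; last first.
  have itns' : iter t (@ordS n) i != s by apply/eqP.
  by rewrite (@Pth_neq M _ _ _ itns') mulmx0 mul0mx scaler0.
have [ltt|] := ltnP t t0.
  have : ~~ P t by apply: contraTN ltt => Pt; rewrite -leqNgt mint0.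
  rewrite /P ltn_ord its eqxx inord_val andbT /= negbK => /eqP ->.
  by rewrite scale0r.
rewrite leq_eqVlt => /orP[/eqP E|gt].
  have et : t = inord t0 by apply/val_inj; rewrite /= (inordK lt0) E.
  by rewrite et eqxx in tne.
rewrite -mulmxA (@Pth_comp M i s s t (h - t0)) // HPth ?mulmx0 ?scaler0 //.
by move: lt0 gt; lia.
Qed.

Lemma psi_exists : exists psi : 'cV[k]_(rdim M s),
  forall t, (t <= h)%N -> p *m Pth M i s t *m psi = (t == h)%:R%:M.
Proof.
pose S := \matrix_(t < h) (p *m Pth M i s t).
have nS : ~~ (p *m Pth M i s h <= S)%MS.
  apply/negP => /submxP[D E].
  pose c (t : 'I_h.+1) := if unlift ord_max t is Some t' then D 0 t' else -1.
  have : \sum_(t < h.+1) c t *: (p *m Pth M i s t) = 0.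
    rewrite big_ord_recr /= /c unlift_none E mulmx_sum_row.
    rewrite scaleN1r; apply/eqP; rewrite subr_eq0; apply/eqP.
    apply: eq_bigr => t _; rewrite rowK.
    have -> : widen_ord (leqnSn h) t = lift ord_max t by apply/val_inj; exact: (esym (lift_max t)).
    by rewrite liftK.
  move/indep; rewrite /c unlift_none => /eqP; rewrite oppr_eq0 oner_eq0 //.
have [phi [phi0 phi1]] := sep_exists nS.
exists phi => t; rewrite leq_eqVlt => /orP[/eqP ->|lt]; first by rewrite eqxx phi1.
rewrite ltn_eqF //.
have -> : p *m Pth M i s t = row (Ordinal lt) S by rewrite rowK.
by rewrite -row_mul phi0 row0 /= raddf0.
Qed.
End Gen.

Definition Fm M N h i (psi : 'cV[k]_(rdim M (iter h (@ordS n) i))) (q : 'rV[k]_(rdim N i)) j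
  : 'M[k]_(rdim M j, rdim N j) :=
  \sum_(t < h.+1) (Pth M j (iter h (@ordS n) i) (h - t) *m psi) *m (q *m Pth N i j t).

Lemma Fm_hom M N h i psi q :
  (forall a, pathmx M a h.+1 = 0) -> (forall b, q *m Pth N i b h.+1 = 0) ->
  is_hom (@Fm M N h i psi q).
Proof.
move=> Hh Hq j; rewrite /Fm mulmx_sumr mulmx_suml.
rewrite big_ord_recl big_ord_recr /= subn0 !mulmxA -PthSl (Pth_height Hh) // !mul0mx add0r.
rewrite -!mulmxA PthR Hq !mulmx0 addr0.
apply: eq_bigr => t _; rewrite !mulmxA -PthSl -!mulmxA PthR /=.
by rewrite /bump /= add1n subnSK.
Qed.

Lemma Fm_p M N h i psi (p : 'rV[k]_(rdim M i)) q :
  (forall t, (t <= h)%N -> p *m Pth M i (iter h (@ordS n) i) t *m psi = (t == h)%:R%:M) ->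
  p *m @Fm M N h i psi q i = q.
Proof.
move=> Hpsi; rewrite /Fm mulmx_sumr big_ord_recl big1 ?addr0.
  by rewrite !mulmxA Hpsi ?subn0 ?leq_subr // eqxx mul1mx Pth0 tr_id mulmx1.
move=> t _; rewrite !mulmxA Hpsi ?leq_subr //.
have -> : ((h - lift ord0 t)%N == h) = false.
  by apply/negbTE; rewrite lift0; have := ltn_ord t; lia.
by rewrite /= raddf0 !mul0mx.
Qed.

Definition gdata M h i p psi : Prop :=
  [/\ forall a, pathmx M a h.+1 = 0,
      p *m Pth M i (iter h (@ordS n) i) h != 0,
      forall t, (t <= h)%N -> p *m Pth M i (iter h (@ordS n) i) t *m psi = (t == h)%:R%:M &
      forall j, @Fm M M h i psi p j = 1%:M].

Lemma gdata_exists M l : bound l M -> indecomposable M ->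
  exists (h : nat) (i : 'I_n) (p : 'rV[k]_(rdim M i)) (psi : 'cV[k]_(rdim M (iter h (@ordS n) i))),
    @gdata M h i p psi /\ (h <= l)%N.
Proof.
move=> Hb Hind.
pose P h := [forall a, pathmx M a h.+1 == 0].
have exP : exists h, P h by exists l; apply/forallP => a; rewrite Hb.
case: (ex_minnP exP) => h /forallP Hh minh.
have Hh' : forall a, pathmx M a h.+1 = 0 by move=> a; apply/eqP.
have hl : (h <= l)%N by apply: minh; apply/forallP => a; rewrite Hb.
have [i Hi] : exists i, pathmx M i h != 0.
  case: h Hh Hh' minh hl => [|h'] Hh Hh' minh hl.
    case: Hind => nz _; apply/existsP; move: nz; apply: contra_notT.
    move/existsPn => H a; have := H a; rewrite negbK => /eqP E.
    have E' : (1%:M : 'M[k]_(rdim M a)) = 0 := E.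
    by rewrite -(mxrank1 k (rdim M a)) E' mxrank0.
  apply/existsP; apply: contraT => /existsPn H.
  have : (h'.+1 <= h')%N by apply: minh; apply/forallP => a; have := H a; rewrite negbK.
  by rewrite ltnn.
have [r Hr] : exists r, row r (pathmx M i h) != 0.
  apply/existsP; apply: contraT => /existsPn H.
  suff : pathmx M i h == 0 by rewrite (negbTE Hi).
  by apply/eqP/row_matrixP => r; rewrite row0; apply/eqP; have := H r; rewrite negbK.
pose p := 'e_r : 'rV[k]_(rdim M i).
have Hp : p *m Pth M i (iter h (@ordS n) i) h != 0 by rewrite PthE tr_id mulmx1 -rowE.
have [psi Hpsi] := psi_exists Hh' Hp.
exists h, i, p, psi; split => //; split => //.
have Hq : forall b, p *m Pth M i b h.+1 = 0 by move=> b; rewrite (Pth_height Hh') ?mulmx0.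
pose e := Defs.Hom (Fm_hom psi Hh' Hq).
have He : forall j, e j *m e j = e j.
  move=> j; rewrite /= {1}/Fm mulmx_suml; apply: eq_bigr => t _.
  by rewrite -!mulmxA -(hom_Pth e) /= [p *m (_ *m _)]mulmxA Fm_p.
case: (idem_triv Hind He) => // H0.
have := Fm_p (N := M) p Hpsi; rewrite [Fm _ _ _]H0 mulmx0 => p0.
by move: Hp; rewrite -p0 mul0mx eqxx.
Qed.

Lemma R_Pth' M a b c m : ordS a = b -> R M a b *m Pth M b c m = Pth M a c m.+1.
Proof. by move=> <-; exact: R_Pth. Qed.

Lemma inj_rank m d (A : 'M[k]_(m, d)) : (forall v : 'rV[k]_m, v *m A = 0 -> v = 0) -> \rank A = m.
Proof.
move=> H; apply/eqP; change (row_free A); rewrite -kermx_eq0; apply/eqP/row_matrixP => r.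
by rewrite row0; apply: H; rewrite -row_mul mulmx_ker row0.
Qed.

Section GD.
Variables (M : rep k n) (h : nat) (i : 'I_n) (p : 'rV[k]_(rdim M i))
  (psi : 'cV[k]_(rdim M (iter h (@ordS n) i))).
Hypothesis G : @gdata M h i p psi.
Local Notation s := (iter h (@ordS n) i).

Let Hh : forall a, pathmx M a h.+1 = 0. Proof. by case: G. Qed.
Let Hp : p *m Pth M i s h != 0. Proof. by case: G. Qed.
Let Hpsi : forall t, (t <= h)%N -> p *m Pth M i s t *m psi = (t == h)%:R%:M. Proof. by case: G. Qed.
Let He : forall j, @Fm M M h i psi p j = 1%:M. Proof. by case: G. Qed.

Lemma Fm_mul Y (F : Defs.hom M Y) j :
  F j = \sum_(t < h.+1) (Pth M j s (h - t) *m psi) *m ((p *m F i) *m Pth Y i j t).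
Proof.
rewrite -[F j]mul1mx -(He j) /Fm mulmx_suml; apply: eq_bigr => t _.
by rewrite -!mulmxA (hom_Pth F) !mulmxA.
Qed.

Lemma hom_unique Y (F1 F2 : Defs.hom M Y) : p *m F1 i = p *m F2 i -> forall j, F1 j = F2 j.
Proof. by move=> E j; rewrite (Fm_mul F1) (Fm_mul F2) E. Qed.

Lemma top_zero j : j != i -> (rdim M j - \rank (rarr M (ord_pred j)) = 0)%N.
Proof.
move=> ji; apply/eqP; rewrite subn_eq0.
have S1 : (1%:M <= R M (ord_pred j) j)%MS.
  rewrite -(He j) /Fm; apply: summx_sub => -[[|t] lt] _ /=.
    by rewrite Pth0 tr_neq 1?eq_sym // !mulmx0 sub0mx.
  rewrite Pth_pred; set Rm := R M _ j.
  rewrite (mulmxA p) (mulmxA _ (p *m _)); exact: submxMl.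
have := mxrankS S1; rewrite mxrank1 => le; apply: (leq_trans le).
by rewrite RE mxrankM_maxl.
Qed.

Lemma top_nonzero : (rdim M i - \rank (rarr M (ord_pred i)) != 0)%N.
Proof.
apply/negP; rewrite subn_eq0 => le.
have rf : row_full (R M (ord_pred i) i).
  by rewrite /row_full RE rank_tr ?ord_predK // eqn_leq le andbT -(rank_tr _ (ord_predK i)) rank_leq_col.
have /submxP[Z EZ] := submx_full p rf.
move: Hp; rewrite EZ -mulmxA R_Pth' ?ord_predK // (Pth_height Hh) // mulmx0 eqxx.
by [].
Qed.

Lemma soc_zero j : j != s -> (rdim M j - \rank (rarr M j) = 0)%N.
Proof.
move=> js; rewrite inj_rank ?subnn // => v v0.
rewrite -[v]mulmx1 -(He j) /Fm mulmx_sumr big1 // => -[t lt] _ /=.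
have [tlt|] := ltnP t h.
  have -> : (h - t = (h - t.+1).+1)%N by lia.
  by rewrite PthSl !mulmxA v0 !mul0mx.
move=> ht; have -> : t = h by lia.
by rewrite (@Pth_neq M i j h) 1?eq_sym // !mulmx0.
Qed.

Lemma soc_nonzero : (rdim M s - \rank (rarr M s) != 0)%N.
Proof.
apply/negP; rewrite subn_eq0 => le.
have rf : row_free (rarr M s) by rewrite /row_free eqn_leq le rank_leq_row.
move: Hp; rewrite -(mulmx_free_eq0 _ rf) -mulmxA PthR (Pth_height Hh) // mulmx0 eqxx.
by [].
Qed.

End GD.

Lemma gd_proj M h i p psi l : @gdata M h i p psi -> (l <= h)%N -> projective l M.
Proof.
move=> G lh X Y bX bY g gs hh.
have [Hh _ Hpsi _] := G.
have rf : row_full (g i) by rewrite /row_full gs.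
have [B HB] := row_fullP rf.
pose x := p *m hh i *m B.
have Hq : forall b, x *m Pth X i b h.+1 = 0.
  by move=> b; rewrite (Pth_height bX) ?mulmx0 // ltnS.
pose F := Defs.Hom (Fm_hom psi Hh Hq).
exists F => j.
have := @hom_unique M h i p psi G Y (Defs.Hom (compf_hom F g)) hh.
apply => //=; rewrite /compf mulmxA Fm_p // /x -mulmxA HB mulmx1 //.
Qed.

Section Shift.
Variable l : nat.
Definition Sh : 'M[k]_(l.+1) := \matrix_(a, b) ((b : nat) == a.+1)%:R.

Lemma shiftE (z : 'rV[k]_(l.+1)) m b :
  (z *m Sh ^+ m) 0 b = if (m <= b)%N then z 0 (inord (b - m)) else 0.
Proof.
elim: m b => [|m IH] b; first by rewrite expr0 mulmx1 subn0 inord_val.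
rewrite exprSr mulmxA mxE.
case: b => [[|b'] lb] /=.
  by rewrite big1 // => a _; rewrite [Sh _ _]mxE /= mulr0.
rewrite (bigD1 (inord b')) /=; last by [].
rewrite big1 ?addr0.
  rewrite [Sh _ _]mxE inordK; last by rewrite -ltnS ltnW.
  by rewrite eqxx mulr1 IH ltnS subSS inordK // ltnW.
move=> a ne; rewrite [Sh _ _]mxE /=.
suff -> : (b'.+1 == a.+1) = false by rewrite mulr0.
apply/negbTE; apply: contra ne; rewrite eqSS => /eqP ->.
by apply/eqP/val_inj; rewrite /= inordK.
Qed.

Lemma Sh_pow_l : Sh ^+ l.+1 = 0.
Proof.
apply/row_matrixP => r; rewrite row0 rowE; apply/rowP => b.
by rewrite shiftE [in RHS]mxE ltnNge -ltnS ltn_ord.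
Qed.
End Shift.

Lemma proj_rad l P : bound l P -> projective l P -> forall c (u : 'rV[k]_(rdim P c)),
  (forall b, u *m Pth P c b l = 0) -> (u <= R P (ord_pred c) c)%MS.
Proof.
move=> bP prP c u Hu; apply: contraT => nu.
have [phi [phi0 phi1]] := sep_exists nu.
pose X := @Rep k n (fun _ => l.+1) (fun _ => Sh l).
pose Y := @Rep k n (fun _ => 1%N) (fun _ => 0).
have pX : forall a m, pathmx X a m = Sh l ^+ m.
  by move=> a; elim=> [|m IH]; [rewrite expr0 | rewrite /= IH exprSr].
have bX : bound l X by move=> a; rewrite pX Sh_pow_l.
have bY : bound l Y by move=> a /=; rewrite mulmx0.
pose g (j : 'I_n) : 'M[k]_(rdim X j, rdim Y j) := delta_mx 0 0.
have gP : is_hom g.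
  move=> j; rewrite /g /= mulmx0 -colE; apply/matrixP => a b; rewrite !mxE /=.
  by [].
have gs : surj_hom (Defs.Hom gP) by move=> j; rewrite /= mxrank_delta.
pose hY (j : 'I_n) : 'M[k]_(rdim P j, rdim Y j) := tr (rdim P) j c *m phi.
have hP : is_hom hY.
  move=> a; rewrite /hY /= mulmx0 mulmxA -RE.
  case: (a =P ord_pred c) => [->|ne]; first by rewrite phi0.
  by rewrite R_neq ?mul0mx //; apply/eqP.
have [h' Hh'] := prP X Y bX bY (Defs.Hom gP) gs (Defs.Hom hP).
pose z := u *m h' c.
have z0 : z 0 0 = 1.
  have := congr1 (mulmx u) (Hh' c); rewrite /compf /= /hY tr_id mul1mx phi1 mulmxA -colE.
  by move/matrixP/(_ 0 0); rewrite !mxE.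
have zl : z *m Sh l ^+ l = 0.
  have := hom_Pth h' c (iter l (@ordS n) c) l.
  rewrite PthE tr_id mulmx1 pX => E.
  by rewrite /z -mulmxA E mulmxA Hu mul0mx.
have := congr1 (fun A : 'rV[k]_(l.+1) => A 0 ord_max) zl; rewrite shiftE leqnn subnn.
have -> : inord 0 = 0 :> 'I_l.+1 by apply/val_inj; rewrite /= inordK.
by rewrite z0 mxE => /eqP; rewrite oner_eq0.
Qed.

Lemma proj_deep l P : bound l P -> projective l P -> forall r, (r < l)%N ->
  forall j (u : 'rV[k]_(rdim P j)), (forall b, u *m Pth P j b (l - r) = 0) ->
  exists a (y : 'rV[k]_(rdim P a)), u = y *m Pth P a j r.+1.
Proof.
move=> bP prP; elim=> [|r IH] lt j u Hu.
  move: Hu; rewrite subn0 => /(proj_rad bP prP) /submxP[Z ->].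
  by exists (ord_pred j), Z; rewrite Pth1.
have Hu' : forall b, u *m Pth P j b (l - r) = 0.
  by apply: (Pth_ext Hu); lia.
have [a [y Ey]] := IH (ltnW lt) j u Hu'.
case: (iter r.+1 (@ordS n) a =P j) => [ia|ina]; last first.
  exists j, 0; rewrite mul0mx Ey (@Pth_neq P a j r.+1) ?mulmx0 //; exact/eqP.
have Hy : forall b, y *m Pth P a b l = 0.
  move=> b; have -> : l = (r.+1 + (l - r.+1))%N by lia.
  by rewrite -(Pth_comp _ _ _ ia) mulmxA -Ey Hu.
have /submxP[Z EZ] := proj_rad bP prP Hy.
exists (ord_pred a), Z; by rewrite Ey EZ -mulmxA R_Pth' ?ord_predK.
Qed.

Lemma top_contra l M N hM hN i p psiM q psiN :
  @gdata M hM i p psiM -> @gdata N hN i q psiN -> (hM <= hN)%N -> (hN < l)%N ->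
  stable_hom_zero l N M -> False.
Proof.
move=> GM GN le lt Hst.
have [HhM HpM _ _] := GM; have [HhN _ HpsiN _] := GN.
have Hq : forall b, p *m Pth M i b hN.+1 = 0.
  by move=> b; rewrite (Pth_height HhM) ?mulmx0 // ltnS.
pose F := Defs.Hom (Fm_hom psiN HhN Hq).
have Fq : q *m F i = p by rewrite /= Fm_p.
have [P [a [b [bP [prP Hab]]]]] := Hst F.
pose w := q *m a i.
have Hw : forall c, w *m Pth P i c l = 0.
  apply: (@Pth_ext _ _ _ hN.+1) => // c.
  by rewrite /w -mulmxA (hom_Pth a) mulmxA (Pth_height HhN) // mulmx0 mul0mx.
have /submxP[Z EZ] := proj_rad bP prP Hw.
have Ep : p = Z *m b (ord_pred i) *m R M (ord_pred i) i.
  by rewrite -Fq -Hab /compf mulmxA -/w EZ -!mulmxA (hom_R b).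
move: HpM; rewrite Ep -mulmxA R_Pth' ?ord_predK // (Pth_height HhM) // mulmx0 eqxx.
by [].
Qed.

Lemma soc_contra l M N hM hN iM iN p psiM q psiN :
  @gdata M hM iM p psiM -> @gdata N hN iN q psiN -> (hM <= hN)%N -> (hN < l)%N ->
  iter hM (@ordS n) iM = iter hN (@ordS n) iN -> stable_hom_zero l M N -> False.
Proof.
move=> GM GN le lt Es Hst.
have [HhM HpM HpsiM _] := GM; have [HhN HpN _ _] := GN.
pose d := (hN - hM)%N.
have id : iter d (@ordS n) iN = iM.
  apply: (@iter_ordS_inj hM); rewrite -iterD Es /d subnKC //.
pose q' := q *m Pth N iN iM d.
have Hq : forall b, q' *m Pth N iM b hM.+1 = 0.
  move=> b; rewrite /q' -mulmxA Pth_comp // (Pth_height HhN) ?mulmx0 //.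
  by rewrite /d; lia.
pose F := Defs.Hom (Fm_hom psiM HhM Hq).
have Fp : p *m F iM = q' by rewrite /= Fm_p.
have [P [a [b [bP [prP Hab]]]]] := Hst F.
pose s := iter hN (@ordS n) iN.
pose u := p *m a iM *m Pth P iM s hM.
have l0 : (0 < l)%N by lia.
have Hu : forall c, u *m Pth P s c (l - l.-1) = 0.
  move=> c; have -> : (l - l.-1 = 1)%N by lia.
  rewrite /u -mulmxA Pth_comp // -mulmxA (hom_Pth a) mulmxA (Pth_height HhM).
  by rewrite mulmx0 mul0mx.
  by rewrite addn1.
have lt' : (l.-1 < l)%N by lia.
have [a' [y Ey]] := proj_deep bP prP lt' Hu.
have : u *m b s = 0.
  rewrite Ey prednK // -mulmxA -(hom_Pth b) mulmxA (Pth_height HhN) ?mulmx0 //.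
have : u *m b s = q *m Pth N iN s hN.
  rewrite /u -mulmxA -(hom_Pth b) mulmxA -(mulmxA p).
  have -> : a iM *m b iM = F iM by exact: Hab.
  by rewrite Fp /q' -mulmxA Pth_comp // /d subnK.
move=> -> E0; move: HpN; rewrite -/s E0 eqxx; by [].
Qed.

End Aux.

Theorem lemma2p9 (k : closedFieldType) (n l : nat) (M N : rep k n) :
  bound l M -> bound l N ->
  indecomposable M -> indecomposable N ->
  ~ projective l M -> ~ projective l N ->
  stable_hom_zero l M N -> stable_hom_zero l N M ->
  ~ iso (top M) (top N) /\ ~ iso (soc M) (soc N).
Proof.
move=> bM bN iM iN npM npN sMN sNM.
have [hM [i1 [p [psiM [GM _]]]]] := gdata_exists bM iM.
have [hN [i2 [q [psiN [GN _]]]]] := gdata_exists bN iN.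
have hMl : (hM < l)%N by rewrite ltnNge; apply/negP => /(gd_proj GM).
have hNl : (hN < l)%N by rewrite ltnNge; apply/negP => /(gd_proj GN).
split.
  move=> /iso_dim Ht.
  have e12 : i1 = i2.
    have := top_nonzero GM; have := Ht i1; rewrite /= => ->.
    case: (i1 =P i2) => // /eqP ne; by rewrite (top_zero GN ne).
  subst i2.
  case: (leqP hM hN) => le; first exact: (top_contra GM GN le hNl sNM).
  exact: (top_contra GN GM (ltnW le) hMl sMN).
move=> /iso_dim Ht.
have e12 : iter hM (@ordS n) i1 = iter hN (@ordS n) i2.
  have := soc_nonzero GM; have := Ht (iter hM (@ordS n) i1); rewrite /= => ->.
  case: (iter hM (@ordS n) i1 =P iter hN (@ordS n) i2) => // /eqP ne.
  by rewrite (soc_zero GN ne).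
case: (leqP hM hN) => le; first exact: (soc_contra GM GN le hNl e12 sMN).
exact: (soc_contra GN GM (ltnW le) hMl (esym e12) sNM).
Qed.
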